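(* Let $I$ be any set, $n$ a positive integer, and $R=\prod_{i\in I}\mathbb Z/n\mathbb Z$. Let $\mathbf A$ be a $k\times l$ matrix with entries in $R$, written as $\mathbf A=\prod_{i\in I}\mathbf A_i$ with $\mathbf A_i$ a $k\times l$ matrix over $\mathbb Z/n\mathbb Z$. Then $\mathbf A$ is partition regular over $R$ if and only if there is a prime $p$ dividing $n$ such that either for some $i\in I$ the matrix $\mathbf A_i \bmod p$ (over $\mathbb F_p$) satisfies the generalised columns condition, or for infinitely many $i\in I$ the matrix $\mathbf A_i\bmod p$ satisfies the columns condition.
   Context: $\mathbf{A}$ is partition regular over $R$ if for every $r\ge1$ and every map $\chi\colon R\to\{1,\dots,r\}$ there is a nonzero $\mathbf{x}=(x_1,\dots,x_l)^{\intercal}\in R^l$ with $\mathbf{A}\mathbf{x}=0$ and $\chi(x_1)=\dots=\chi(x_l)$. For a matrix $\mathbf B$ over a ring $S$ with columns $\mathbf c_1,\dots,\mathbf c_l\in S^k$: generalised columns condition: there exist $m\ge0$, a partition $\{1,\dots,l\}=I_0\cup\dots\cup I_m$ and $d_0,\dots,d_m\in S\setminus\{0\}$ with (i) $d_0\sum_{i\in I_0}\mathbf c_i=0$; (ii) for $1\le t\le m$, $d_t\sum_{i\in I_t}\mathbf c_i$ lies in the $S$-submodule generated by $\mathbf c_j$, $j\in I_0\cup\dots\cup I_{t-1}$; (iii) if $m>0$, the ideal $d_0(d_1\cdots d_m)^nS$ is infinite for every $n\ge0$. Columns condition (for $S$ a domain, here the field $\mathbb F_p$): there exist $m\ge0$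 and a partition $\{1,\dots,l\}=I_0\cup\dots\cup I_m$ with $\sum_{i\in I_0}\mathbf c_i=0$ and, for $1\le t\le m$, $\sum_{i\in I_t}\mathbf c_i$ in the span (over the fraction field) of the $\mathbf c_j$ with $j\in I_0\cup\dots\cup I_{t-1}$. *)

(* Defs.v *)
From HB Require Import structures.
From mathcomp Require Import all_boot all_order all_algebra.
Set Implicit Arguments. Unset Strict Implicit. Unset Printing Implicit Defensive.
Import Order.TTheory GRing.Theory Num.Theory.
Local Open Scope ring_scope.

Definition finitely_many (T : Type) (P : T -> Prop) : Prop :=
  exists (N : nat) (g : 'I_N -> T), forall x, P x -> exists j, g j = x.

Definition infinitely_many (T : Type) (P : T -> Prop) : Prop :=
  ~ finitely_many P.

(* The partition {1..l} = I_0 u ... u I_m (nonempty blocks) is encoded by a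
   surjection f : 'I_l -> 'I_m.+1 (I_t = f^-1(t)). *)
Definition gen_columns_condition (S : comNzRingType) (k l : nat)
    (B : 'M[S]_(k, l)) : Prop :=
  exists (m : nat) (f : 'I_l -> 'I_m.+1) (d : 'I_m.+1 -> S),
    (forall t, exists j, f j = t) /\
    (forall t, d t != 0) /\
    d ord0 *: (\sum_(j < l | f j == ord0) col j B) = 0 /\
    (forall t : 'I_m.+1, t != ord0 ->
       exists lam : 'I_l -> S,
         d t *: (\sum_(j < l | f j == t) col j B)
         = \sum_(j < l | (f j < t)%N) lam j *: col j B) /\
    ((0 < m)%N -> forall e : nat,
       infinitely_many
         (fun y : S => exists x : S,
             y = d ord0 * (\prod_(t < m.+1 | t != ord0) d t) ^+ e * x)).

(* Columns condition for a matrix over a field F (the fraction field of F is F). *)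
Definition columns_condition (F : fieldType) (k l : nat) (B : 'M[F]_(k, l)) : Prop :=
  exists (m : nat) (f : 'I_l -> 'I_m.+1),
    (forall t, exists j, f j = t) /\
    \sum_(j < l | f j == ord0) col j B = 0 /\
    (forall t : 'I_m.+1, t != ord0 ->
       exists lam : 'I_l -> F,
         \sum_(j < l | f j == t) col j B
         = \sum_(j < l | (f j < t)%N) lam j *: col j B).

(* Z/nZ is represented by 'I_n (with arithmetic mod n); R = prod_{i in I} Z/nZ
   is the type I -> 'I_n, with componentwise operations. *)
Definition Rprod (I : Type) (n : nat) := I -> 'I_n.

Definition solves (I : Type) (n k l : nat) (A : 'M[Rprod I n]_(k, l))
    (x : 'I_l -> Rprod I n) : Prop :=
  forall (a : 'I_k) (i : I), ((\sum_(j < l) A a j i * x j i) %% n)%N = 0%N.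

Definition nonzero_vec (I : Type) (n l : nat) (x : 'I_l -> Rprod I n) : Prop :=
  exists (j : 'I_l) (i : I), (x j i : nat) != 0%N.

Definition partition_regular (I : Type) (n k l : nat) (A : 'M[Rprod I n]_(k, l)) : Prop :=
  forall (r : nat), (0 < r)%N -> forall chi : Rprod I n -> 'I_r,
    exists x : 'I_l -> Rprod I n,
      nonzero_vec x /\ solves A x /\ forall j j', chi (x j) = chi (x j').

Definition component_mod_p (I : Type) (n k l : nat) (p : nat)
    (A : 'M[Rprod I n]_(k, l)) (i : I) : 'M['F_p]_(k, l) :=
  \matrix_(a < k, b < l) (((A a b i : 'I_n) : nat)%:R : 'F_p).

(* Main.v *)
Require Import Defs.
From HB Require Import structures.
From mathcomp Require Import all_boot all_order all_algebra.
From mathcomp Require Import zify boolp wochoice.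
Set Implicit Arguments. Unset Strict Implicit. Unset Printing Implicit Defensive.


Definition concat (A : Type) N1 N2 (u : {ffun 'I_N1 -> A}) (v : {ffun 'I_N2 -> A}) : {ffun 'I_(N1 + N2) -> A} :=
  [ffun i => match split i with inl a => u a | inr b => v b end].
Lemma split_lshift m n (i : 'I_m) : split (lshift n i) = inl i.
Proof. exact: (unsplitK (inl _ i)). Qed.
Lemma split_rshift m n (i : 'I_n) : split (rshift m i) = inr i.
Proof. exact: (unsplitK (inr _ i)). Qed.
Section Words.
Variable A : Type.
Definition pt N (w : {ffun 'I_N -> option A}) (a : A) : {ffun 'I_N -> A} :=
  [ffun i => odflt a (w i)].
Definition isline N (w : {ffun 'I_N -> option A}) := exists i, w i = None.

Lemma pt_concat N1 N2 (x : {ffun 'I_N1 -> option A}) (y : {ffun 'I_N2 -> option A}) a :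
  pt (concat x y) a = concat (pt x a) (pt y a).
Proof. by apply/ffunP=> i; rewrite !ffunE; case: (split i) => j; rewrite ffunE. Qed.

Lemma pt_some N (u : {ffun 'I_N -> A}) a : pt [ffun i => Some (u i)] a = u.
Proof. by apply/ffunP=> i; rewrite !ffunE. Qed.

Lemma isline_concatl N1 N2 (x : {ffun 'I_N1 -> option A}) (y : {ffun 'I_N2 -> option A}) :
  isline x -> isline (concat x y).
Proof. by case=> i xi; exists (lshift N2 i); rewrite ffunE split_lshift. Qed.
Lemma isline_concatr N1 N2 (x : {ffun 'I_N1 -> option A}) (y : {ffun 'I_N2 -> option A}) :
  isline y -> isline (concat x y).
Proof. by case=> i xi; exists (rshift N1 i); rewrite ffunE split_rshift. Qed.
End Words.

Definition HJ (K : nat) := forall C : finType, exists N, forall chi : {ffun 'I_N -> 'I_K} -> C,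
  exists w : {ffun 'I_N -> option 'I_K}, isline w /\ forall a b, chi (pt w a) = chi (pt w b).

Lemma HJ_small K : (K <= 1)%N -> HJ K.
Proof.
move=> K1 C; exists 1%N => chi; exists [ffun _ => None]; split; first by exists ord0; rewrite ffunE.
move=> a b; have -> // : a = b.
apply: ord_inj; have := ltn_ord a; have := ltn_ord b; lia.
Qed.

Section Step.
Variable k : nat.
Hypothesis IH : HJ k.+1.
Variable C : finType.

Definition wd (a : 'I_k.+1) : 'I_k.+2 := widen_ord (leqnSn _) a.

Definition mono N (chi : {ffun 'I_N -> 'I_k.+2} -> C) (w : {ffun 'I_N -> option 'I_k.+2}) :=
  forall a b, chi (pt w a) = chi (pt w b).

Definition Focus s := exists N, forall chi : {ffun 'I_N -> 'I_k.+2} -> C,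
  (exists w, isline w /\ mono chi w) \/
  exists (f : {ffun 'I_N -> 'I_k.+2}) (F : seq ({ffun 'I_N -> option 'I_k.+2} * C)),
    size F = s /\ uniq (map snd F) /\
    forall m c, (m, c) \in F -> [/\ isline m, pt m ord_max = f &
       forall a, a != ord_max -> chi (pt m a) = c].

Lemma Focus0 : Focus 0.
Proof. exists 0%N => chi; right; exists [ffun i => ord0], [::]; split => //. Qed.

Lemma wd_max (a : 'I_k.+2) : a != ord_max -> exists a', a = wd a'.
Proof.
move=> ha; have lt: (a < k.+1)%N by rewrite ltn_neqAle -ltnS ltn_ord andbT; apply: contra ha => /eqP e; apply/eqP/val_inj.
by exists (Ordinal lt); apply/val_inj.
Qed.

Lemma FocusS s : Focus s -> Focus s.+1.
Proof.
case=> N1 HF.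
have [N2 H2] := IH {ffun {ffun 'I_N1 -> 'I_k.+2} -> C}.
exists (N2 + N1)%N => chi.
pose chi' (u : {ffun 'I_N2 -> 'I_k.+1}) : {ffun {ffun 'I_N1 -> 'I_k.+2} -> C} :=
  [ffun v => chi (concat [ffun i => wd (u i)] v)].
have [l [ll ml]] := H2 chi'.
pose l' : {ffun 'I_N2 -> option 'I_k.+2} := [ffun i => omap wd (l i)].
have ptl a : pt l' (wd a) = [ffun i => wd (pt l a i)].
  by apply/ffunP=> i; rewrite !ffunE; case: (l i).
pose chi'' v := chi (concat (pt l' ord0) v).
have key a v : a != ord_max -> chi (concat (pt l' a) v) = chi'' v.
  move=> /wd_max[a' ->]; rewrite /chi''.
  have -> : (ord0 : 'I_k.+2) = wd ord0 by apply/val_inj.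
  rewrite !ptl; move: (ml a' ord0) => /ffunP /(_ v); rewrite !ffunE //.
have lift_line m : isline m -> mono chi'' m -> exists w, isline w /\ mono chi w.
  move=> lm mm; exists (concat [ffun i => Some (pt l' ord0 i)] m); split.
    exact: isline_concatr.
  by move=> a b; rewrite !pt_concat !pt_some; apply: mm.
have [[m [lm mm]]|[f [F [sF [uF hF]]]]] := HF chi''; first by left; apply: lift_line lm mm.
case: (boolP (chi'' f \in map snd F)) => [/mapP[[m c] mF /= e]|nf].
  have [lm fm cm] := hF _ _ mF; left; apply: (lift_line m) => //.
  have cc a : chi'' (pt m a) = c.
    by case: (eqVneq a ord_max) => [->|/cm //]; rewrite fm.
  by move=> a b; rewrite !cc.
right; exists (concat (pt l' ord_max) f).
exists ((concat l' [ffun i => Some (f i)], chi'' f) ::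
        map (fun mc => (concat l' mc.1, mc.2)) F).
split; first by rewrite /= size_map sF.
split; first by rewrite /= -map_comp; apply/andP; split => //.
have ll' : isline l' by case: ll => i li; exists i; rewrite ffunE li.
move=> m c; rewrite inE => /orP[/eqP [-> ->]|/mapP[[m0 c0] m0F [-> ->]]] /=.
  split; first exact: isline_concatl.
    by rewrite pt_concat pt_some.
  by move=> a ha; rewrite pt_concat pt_some key.
have [lm fm cm] := hF _ _ m0F; split; first exact: isline_concatl.
  by rewrite pt_concat fm.
by move=> a ha; rewrite pt_concat key // cm.
Qed.

Lemma FocusN s : Focus s.
Proof. elim: s => [|s]; [exact: Focus0 | exact: FocusS]. Qed.

End Step.

Lemma HJ_step k : HJ k.+1 -> HJ k.+2.
Proof.
move=> IH C; have [N HN] := FocusN IH C #|C|.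
exists N => chi; have [[w [lw mw]]|[f [F [sF [uF hF]]]]] := HN chi; first by exists w.
case: (boolP (chi f \in map snd F)) => [/mapP[[m c] mF /= e]|nf].
  have [lm fm cm] := hF _ _ mF; exists m; split => //.
  have cc a : chi (pt m a) = c by case: (eqVneq a ord_max) => [->|/cm //]; rewrite fm.
  by move=> a b; rewrite !cc.
have : uniq (chi f :: map snd F) by rewrite /= nf.
move/card_uniqP; rewrite /= size_map sF => h.
by have := max_card (mem (chi f :: map snd F)); rewrite h ltnn.
Qed.

Theorem HJ_all K : HJ K.
Proof.
case: K => [|K]; first exact: HJ_small.
elim: K => [|K IH]; first exact: HJ_small.
exact: HJ_step.
Qed.

Import GRing.Theory.
Local Open Scope ring_scope.

Lemma HJ_fin (A : finType) (C : finType) : exists N, forall chi : {ffun 'I_N -> A} -> C,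
  exists w : {ffun 'I_N -> option A}, isline w /\ forall a b, chi (pt w a) = chi (pt w b).
Proof.
have [N HN] := HJ_all #|A| C; exists N => chi.
have [w [[i0 wi0] mw]] := HN (fun u => chi [ffun i => enum_val (u i)]).
exists [ffun i => omap enum_val (w i)]; split; first by exists i0; rewrite ffunE wi0.
have E a : pt [ffun i => omap enum_val (w i)] a = [ffun i => enum_val (pt w (enum_rank a) i)].
  by apply/ffunP=> i; rewrite !ffunE; case: (w i) => //=; rewrite enum_rankK.
by move=> a b; rewrite !E; exact: mw.
Qed.

Section Lev.
Variable F : finFieldType.

Definition comb (X : finType) (v : nat -> {ffun X -> F}) (m i : nat) (lam : nat -> F) : {ffun X -> F} :=
  [ffun x => v i x + \sum_(i.+1 <= j < m.+1) lam j * v j x].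

Definition Level m := forall C : finType, exists X : finType, forall chi : {ffun X -> F} -> C,
  exists (v : nat -> {ffun X -> F}) (xi : nat -> X),
    (forall i, (i <= m)%N -> v i (xi i) = 1) /\
    (forall i j, (i < j)%N -> (j <= m)%N -> v j (xi i) = 0) /\
    (forall i, (i <= m)%N -> forall lam lam', chi (comb v m i lam) = chi (comb v m i lam')).

Lemma Level0 : Level 0.
Proof.
move=> C; exists unit => chi; exists (fun _ => [ffun _ => 1]), (fun _ => tt).
split; first by move=> i _; rewrite ffunE.
split; first by move=> i j ij jm; have := leq_trans ij jm.
move=> i; rewrite leqn0 => /eqP -> lam lam'; congr chi; apply/ffunP=> x.
by rewrite !ffunE !big_geq.
Qed.

Lemma LevelS m : Level m -> Level m.+1.
Proof.
move=> IH C.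
have [X' HX'] := IH C.
have [N HN] := HJ_fin {ffun option X' -> F} C.
exists ('I_N * option X')%type => chi.
pose vec (u : {ffun 'I_N -> {ffun option X' -> F}}) : {ffun ('I_N * option X') -> F} :=
  [ffun x => u x.1 x.2].
have [w [[mu0 wmu0] mw]] := HN (fun u => chi (vec u)).
pose Q (u : {ffun X' -> F}) : {ffun ('I_N * option X') -> F} :=
  [ffun x => if w x.1 is None then (if x.2 is Some y then u y else 0) else 0].
have [v' [xi' [h1 [h2 h3]]]] := HX' (fun u => chi (Q u)).
pose a0 : {ffun option X' -> F} := [ffun y => if y is None then 1 else 0].
pose v (i : nat) := if i is i'.+1 then Q (v' i') else vec (pt w a0).
pose xi (i : nat) := if i is i'.+1 then (mu0, Some (xi' i')) else (mu0, None).
exists v, xi; split.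
  by case=> [|i] hi /=; rewrite !ffunE /= wmu0 //= ?ffunE // h1.
split.
  case=> [|i] [|j] //= ij jm; rewrite !ffunE /= wmu0 //; exact: h2.
case=> [|i] hi lam lam'.
  have E lm : comb v m.+1 0 lm = vec (pt w [ffun y => a0 y +
       (if y is Some x then \sum_(0 <= j < m.+1) lm j.+1 * v' j x else 0)]).
    apply/ffunP=> -[mu y]; rewrite !ffunE big_add1 /=.
    case E: (w mu) => [c|] /=.
      by rewrite big1 ?addr0 // => j _; rewrite /v !ffunE /= E mulr0.
    rewrite /Q !ffunE /=; case: y => [y|] /=.
      by congr (_ + _); apply: eq_bigr => j _; rewrite ffunE /= E.
    by rewrite big1 // => j _; rewrite ffunE /= E mulr0.
  rewrite !E; exact: mw.
have E lm : comb v m.+1 i.+1 lm = Q (comb v' m i (fun j => lm j.+1)).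
  apply/ffunP=> -[mu y]; rewrite !ffunE big_add1 /=.
  case E: (w mu) => [c|] /=.
    by rewrite big1 ?addr0 // => j _; rewrite /v !ffunE /= E mulr0.
  case: y => [y|] /=; rewrite ?ffunE.
    by congr (_ + _); apply: eq_bigr => j _; rewrite ffunE /= E.
  by rewrite big1 ?addr0 // => j _; rewrite ffunE /= E mulr0.
by rewrite !E; apply: h3.
Qed.

Lemma Level_all m : Level m.
Proof. elim: m => [|m]; [exact: Level0 | exact: LevelS]. Qed.

Lemma sum_nat_pred1 (a b c : nat) (G : nat -> F) :
  \sum_(a <= j < b | c == j) G j = if (a <= c < b)%N then G c else 0.
Proof.
case: ifP => h.
  rewrite big_mkcond (bigD1_seq c) ?mem_index_iota ?iota_uniq //= eqxx big1 ?addr0 //.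
  by move=> j /negbTE; rewrite eq_sym => ->.
rewrite big1_seq // => j /andP[/eqP <-]; rewrite mem_index_iota h.
by [].
Qed.

Lemma count_sum (C : finType) (kap : nat -> C) (s : seq nat) :
  (\sum_(c : C) count (fun i => kap i == c) s)%N = size s.
Proof.
elim: s => [|x s IH] /=; first by rewrite big1.
rewrite big_split /= IH (bigD1 (kap x)) //= eqxx big1 // => c /negbTE.
by rewrite eq_sym => ->.
Qed.

Definition LevelEq m := forall C : finType, exists X : finType, forall chi : {ffun X -> F} -> C,
  exists (v : nat -> {ffun X -> F}) (xi : nat -> X) (c : C),
    (forall i, (i <= m)%N -> v i (xi i) = 1) /\
    (forall i j, (i < j)%N -> (j <= m)%N -> v j (xi i) = 0) /\
    (forall i, (i <= m)%N -> forall lam, chi (comb v m i lam) = c).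

Lemma LevelEq_all m : LevelEq m.
Proof.
move=> C; set M := (#|C| * m)%N.
have [X HX] := Level_all M C; exists X => chi.
have [v [xi [h1 [h2 h3]]]] := HX chi.
pose kap i := chi (comb v M i (fun _ => 0)).
have C0 : (0 < #|C|)%N by apply/card_gt0P; exists (chi [ffun _ => 0]).
have [c hc] : exists c, (m < count (fun i => kap i == c) (iota 0 M.+1))%N.
  apply/existsP; apply: contraT; rewrite negb_exists => /forallP hall.
  have := count_sum kap (iota 0 M.+1); rewrite size_iota.
  have : (\sum_(c : C) count (fun i => kap i == c) (iota 0 M.+1) <= \sum_(c : C) m)%N.
    by apply: leq_sum => c _; have := hall c; rewrite -leqNgt.
  rewrite sum_nat_const cardT -cardE -/M => le1 e; move: le1; rewrite e.
  by rewrite ltnn.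
set s := filter (fun i => kap i == c) (iota 0 M.+1).
have ss : sorted ltn s by apply: sorted_filter; [exact: ltn_trans | exact: iota_ltn_sorted].
have sz : (m < size s)%N by rewrite size_filter.
pose g t := nth 0%N s t.
have gin t : (t <= m)%N -> (g t <= M)%N /\ kap (g t) = c.
  move=> tm; have : g t \in s by apply: mem_nth; apply: leq_ltn_trans sz.
  by rewrite mem_filter mem_iota /= add0n ltnS => /andP[/eqP -> ->].
have gmono t t' : (t <= m)%N -> (t' <= m)%N -> (g t < g t')%N = (t < t')%N.
  move=> tm tm'; have hom := sorted_ltn_nth ltn_trans 0%N ss.
  have r1 : t \in [pred n | (n < size s)%N] by apply: leq_ltn_trans sz.
  have r2 : t' \in [pred n | (n < size s)%N] by apply: leq_ltn_trans sz.
  case: (ltngtP t t') => [lt|lt|->]; first by rewrite (hom _ _ r1 r2 lt).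
    by apply/negbTE; rewrite -leqNgt ltnW // (hom _ _ r2 r1 lt).
  by rewrite ltnn.
exists (fun t => v (g t)), (fun t => xi (g t)), c.
split; first by move=> i im; apply: h1; case: (gin i im).
split; first by move=> i j ij jm; apply: h2; [rewrite gmono // (leq_trans (ltnW ij) jm) | case: (gin j jm)].
move=> t tm lam.
pose lam' j := \sum_(0 <= t' < m.+1 | g t' == j) lam t'.
have -> : comb (fun t => v (g t)) m t lam = comb v M (g t) lam'.
  apply/ffunP=> x; rewrite !ffunE; congr (_ + _).
  rewrite /lam'; under [RHS]eq_bigr => j _ do rewrite mulr_suml.
  rewrite (exchange_big_dep xpredT) //=.
  have -> : \sum_(t.+1 <= j < m.+1) lam j * v (g j) x =
            \sum_(0 <= j < m.+1 | (t < j)%N) lam j * v (g j) x.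
    rewrite [RHS](@big_cat_nat _ _ _ t.+1 0 m.+1) //=.
    rewrite [X in _ = X + _]big_nat_cond [X in _ = X + _]big1 ?add0r; last first.
      by move=> j /andP[/andP[_ jt] tj]; exfalso; move: jt tj; clear; lia.
    rewrite big_nat_cond [RHS]big_nat_cond; apply: eq_bigl => j.
    by case: (t.+1 <= j)%N; case: (j < m.+1)%N.
  rewrite [LHS]big_mkcond /= big_nat_cond [RHS]big_nat_cond.
  apply: eq_bigr => j /andP[/andP[_ hj] _].
  rewrite sum_nat_pred1; rewrite ltnS in hj; have [gM _] := gin j hj.
  by rewrite ltnS gM andbT gmono.
case: (gin t tm) => gM <-; exact: h3.
Qed.
End Lev.


Section Rado.
Variables (F : finFieldType) (k l : nat) (B : 'M[F]_(k, l)).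

Lemma colsumE (P : pred 'I_l) a :
  (\sum_(j < l | P j) col j B) a 0 = \sum_(j < l | P j) B a j.
Proof. by rewrite summxE; apply: eq_bigr => j _; rewrite mxE. Qed.

Lemma colsumZE (P : pred 'I_l) (lam : 'I_l -> F) a :
  (\sum_(j < l | P j) lam j *: col j B) a 0 = \sum_(j < l | P j) lam j * B a j.
Proof. by rewrite summxE; apply: eq_bigr => j _; rewrite !mxE. Qed.

Lemma comb_sum (X : finType) (v : nat -> {ffun X -> F}) m i (lam : nat -> F) x :
  (i <= m)%N ->
  comb v m i (fun s => - lam s) x =
  \sum_(0 <= s < m.+1) ((if s == i then 1 else 0) - (if (i < s)%N then lam s else 0)) * v s x.
Proof.
move=> im; rewrite ffunE.
under [RHS]eq_bigr => s _ do rewrite mulrBl.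
rewrite sumrB; congr (_ + _).
  rewrite (bigD1_seq i) ?mem_index_iota ?iota_uniq //= eqxx mul1r big1 ?addr0 //.
  by move=> s /negbTE ->; rewrite mul0r.
rewrite -sumrN [RHS](@big_cat_nat _ _ _ i.+1 0 m.+1) //=.
rewrite [X in _ = X + _]big_nat_cond [X in _ = X + _]big1 ?add0r; last first.
  by move=> s /andP[/andP[_ si] _]; rewrite ltnNge -ltnS si /= mul0r oppr0.
by apply: eq_big_nat => s /andP[si _]; rewrite si mulNr.
Qed.

Lemma rado_suff : columns_condition B -> forall C : finType, exists X : finType,
  forall chi : {ffun X -> F} -> C, exists y : 'I_l -> {ffun X -> F},
   (forall a x, \sum_(j < l) B a j * y j x = 0) /\ (exists j x, y j x != 0) /\
   (forall j j', chi (y j) = chi (y j')).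
Proof.
case=> m [f [fsurj [H0 Ht]]] C.
have [lam hlam] : exists lam : 'I_m.+1 -> 'I_l -> F, forall t, t != ord0 ->
    \sum_(j < l | f j == t) col j B = \sum_(j < l | (f j < t)%N) lam t j *: col j B.
  have : forall t : 'I_m.+1, exists lm : 'I_l -> F, t != ord0 ->
    \sum_(j < l | f j == t) col j B = \sum_(j < l | (f j < t)%N) lm j *: col j B.
    move=> t; case: (eqVneq t ord0) => [->|nt]; first by exists (fun _ => 0).
    by have [lm hl] := Ht t nt; exists lm.
  by case/fin_all_exists => lm hl; exists lm.
have [X HX] := LevelEq_all F m C; exists X => chi.
have [v [xi [c [h1 [h2 h3]]]]] := HX chi.
pose lamN (s : nat) j := lam (inord s) j.
exists (fun j => comb v m (f j) (fun s => - lamN s j)).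
split.
  move=> a x.
  under eq_bigr => j _ do rewrite (comb_sum v (fun s => lamN s j) x (leq_ord (f j))) mulr_sumr.
  rewrite exchange_big /= big_nat big1 // => s /andP[_ sm].
  under eq_bigr => j _ do rewrite mulrA.
  rewrite -mulr_suml; apply/eqP; rewrite mulf_eq0; apply/orP; left; apply/eqP.
  under eq_bigr => j _ do rewrite mulrBr.
  rewrite sumrB.
  have sE : s = (inord s : 'I_m.+1) :> nat by rewrite inordK.
  case: (eqVneq (inord s : 'I_m.+1) ord0) => [s0|sn0].
    have s00 : s = 0%N by rewrite sE s0.
    rewrite s00 [X in _ - X]big1 ?subr0; last by move=> j _; rewrite ltn0 mulr0.
    transitivity (\sum_(j < l | f j == ord0) B a j); last by rewrite -colsumE H0 mxE.
    rewrite [RHS]big_mkcond; apply: eq_bigr => j _; rewrite -(inj_eq val_inj) /= eq_sym.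
    by case: ifP; rewrite ?mulr1 ?mulr0.
  have := congr1 (fun M : 'M[F]_(k,1) => M a 0) (hlam _ sn0); rewrite colsumE colsumZE => e.
  apply/eqP; rewrite subr_eq0; apply/eqP.
  transitivity (\sum_(j < l | f j == inord s) B a j).
    rewrite [RHS]big_mkcond; apply: eq_bigr => j _; rewrite -(inj_eq val_inj) /= -sE eq_sym.
    by case: ifP; rewrite ?mulr1 ?mulr0.
  rewrite e [LHS]big_mkcond; apply: eq_bigr => j _; rewrite -sE /lamN.
  by case: ifP; rewrite ?mulr0 // mulrC.
split.
  have [j0 _] := fsurj ord0; exists j0, (xi (f j0)).
  rewrite ffunE h1 ?leq_ord // big_nat big1 ?addr0 ?oner_eq0 // => s /andP[fs sm].
  by rewrite h2 ?mulr0.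
by move=> j j'; rewrite !h3 // -ltnS.
Qed.
End Rado.


Section RadoNec.
Variables (F : fieldType) (k l : nat) (B : 'M[F]_(k, l)).
Variables (J : eqType) (R : rel J).
Hypotheses (Rtr : transitive R) (Rtot : total R) (Ranti : antisymmetric R).
Variables (L : 'I_l -> J) (U : 'I_l -> J -> F) (c : F).
Hypotheses (c0 : c != 0) (l0 : (0 < l)%N) (UL : forall j, U j (L j) = c)
  (Usupp : forall j i, U j i != 0 -> R (L j) i)
  (Ueq : forall j a, \sum_(j' < l) B a j' * U j' (L j) = 0).

Lemma colsumE' (P : pred 'I_l) a :
  (\sum_(j < l | P j) col j B) a 0 = \sum_(j < l | P j) B a j.
Proof. by rewrite summxE; apply: eq_bigr => j _; rewrite mxE. Qed.

Lemma colsumZE' (P : pred 'I_l) (lam : 'I_l -> F) a :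
  (\sum_(j < l | P j) lam j *: col j B) a 0 = \sum_(j < l | P j) lam j * B a j.
Proof. by rewrite summxE; apply: eq_bigr => j _; rewrite !mxE. Qed.

Lemma rado_nec : columns_condition B.
Proof.
pose j0 : 'I_l := Ordinal l0.
pose ss := sort R (undup [seq L j | j <- enum 'I_l]).
have ssu : uniq ss by rewrite sort_uniq undup_uniq.
have sss : sorted R ss by apply: sort_sorted.
have memss j : L j \in ss by rewrite mem_sort mem_undup; apply: map_f; rewrite mem_enum.
have ssz : (0 < size ss)%N.
  by rewrite lt0n size_eq0; apply/eqP => e; have := memss j0; rewrite e.
set m := (size ss).-1.
have ssm : size ss = m.+1 by rewrite /m prednK.
pose t (s : nat) := nth (L j0) ss s.
pose f (j : 'I_l) : 'I_m.+1 := inord (index (L j) ss).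
have fE j : f j = index (L j) ss :> nat.
  by rewrite inordK // -ssm index_mem.
have tf j : t (f j) = L j by rewrite /t fE nth_index.
have fsurj : forall s : 'I_m.+1, exists j, f j = s.
  move=> s; have : t s \in ss by apply: mem_nth; rewrite ssm.
  rewrite mem_sort mem_undup => /mapP[j _ e]; exists j; apply/val_inj.
  by rewrite /= fE -e index_uniq // ssm.
have vanish j (s : nat) : (s < f j)%N -> U j (t s) = 0.
  move=> sf; apply/eqP; apply: contraT => /Usupp h.
  have hom := sorted_ltn_nth Rtr (L j0) sss.
  have r1 : s \in [pred n | (n < size ss)%N] by rewrite inE ssm (ltn_trans sf).
  have r2 : (f j : nat) \in [pred n | (n < size ss)%N] by rewrite inE ssm.
  have h2 : R (t s) (L j) by rewrite -tf; exact: hom _ _ r1 r2 sf.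
  have e : L j = t s by apply: Ranti; rewrite h h2.
  have := index_uniq (L j0) (r1 : (s < size ss)%N) ssu; rewrite -/(t s) -e -fE => ef.
  by move: sf; rewrite ef ltnn.
have split_eq (s : 'I_m.+1) a (j1 : 'I_l) : f j1 = s ->
    c * (\sum_(j < l | f j == s) B a j) + \sum_(j < l | (f j < s)%N) B a j * U j (t s) = 0.
  move=> fj1; transitivity (\sum_(j < l) B a j * U j (L j1)); last exact: Ueq.
  rewrite -[L j1]tf fj1 [RHS](bigID (fun j => f j == s)) /=.
  congr (_ + _).
    by rewrite mulr_sumr; apply: eq_bigr => j /eqP fj; rewrite -fj tf UL mulrC.
  rewrite [RHS](bigID (fun j => (f j < s)%N)) /= [X in _ = _ + X]big1 ?addr0; last first.
    move=> j /andP[fn fl]; rewrite vanish ?mulr0 //.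
    rewrite ltn_neqAle leqNgt fl andbT; apply: contra fn => /eqP e; apply/eqP/val_inj; by rewrite /= e.
  apply: eq_bigl => j; case: (ltnP (f j) s) => fl; rewrite ?andbT ?andbF //.
  by apply/esym/negP => /eqP e; move: fl; rewrite e ltnn.
exists m, f; split => //; split.
  apply/matrixP => a b; rewrite ord1 colsumE' mxE.
  have [j1 fj1] := fsurj ord0; have := split_eq ord0 a j1 fj1.
  rewrite [X in _ + X]big1 ?addr0; last by move=> j /=; rewrite ltn0.
  by move/eqP; rewrite mulf_eq0 (negbTE c0) => /eqP.
move=> s sn0; exists (fun j => - (U j (t s)) / c).
apply/matrixP => a b; rewrite ord1 colsumE' colsumZE'.
have [j1 fj1] := fsurj s; have := split_eq s a j1 fj1.
move/eqP; rewrite addr_eq0 => /eqP e.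
apply: (mulfI c0); rewrite e mulr_sumr -sumrN; apply: eq_bigr => j _.
by rewrite mulrA mulrCA mulfV // mulr1 mulNr mulrC.
Qed.
End RadoNec.


Section Fin.
Variable I : Type.

Lemma fin_mono (P Q : I -> Prop) : finitely_many Q -> (forall i, P i -> Q i) -> finitely_many P.
Proof. by case=> N [g hg] PQ; exists N, g => x /PQ /hg. Qed.

Lemma fin_or (P Q : I -> Prop) : finitely_many P -> finitely_many Q ->
  finitely_many (fun i => P i \/ Q i).
Proof.
case=> N1 [g1 h1] [N2 [g2 h2]]; exists (N1 + N2)%N.
exists (fun j => match split j with inl a => g1 a | inr b => g2 b end).
move=> x [/h1[j <-]|/h2[j <-]]; [exists (lshift N2 j) | exists (rshift N1 j)];
  by rewrite ?split_lshift ?split_rshift.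
Qed.

Lemma fin_union (T : finType) (P : T -> I -> Prop) : (forall t, finitely_many (P t)) ->
  finitely_many (fun i => exists t, P t i).
Proof.
move=> hP.
suff : forall s : seq T, finitely_many (fun i => exists2 t, t \in s & P t i).
  move=> /(_ (enum T)) h; apply: (fin_mono h) => i [t h']; exists t; rewrite ?mem_enum //.
elim=> [|x s IH]; first by exists 0%N, (fun j : 'I_0 => match j with Ordinal _ h => False_rect _ (notF h) end) => i [].
apply: fin_mono (fin_or (hP x) IH) _ => i [t]; rewrite inE => /orP[/eqP ->|ts] h; [left|right] => //.
by exists t.
Qed.

Lemma fin_finType (T : finType) (P : T -> Prop) : finitely_many P.
Proof. by exists #|T|, enum_val => x _; exists (enum_rank x); rewrite enum_rankK. Qed.

Lemma inf_pigeon (T : finType) (P : T -> I -> Prop) (Q : I -> Prop) :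
  infinitely_many Q -> (forall i, Q i -> exists t, P t i) -> exists t, infinitely_many (P t).
Proof.
move=> iQ QP; apply: contrapT => hn; apply: iQ.
apply: fin_mono (fin_union (P := P) _) QP => t; apply: contrapT => h; apply: hn; by exists t.
Qed.

Lemma inf_ne (Q : I -> Prop) : infinitely_many Q -> exists i, Q i.
Proof.
move=> iQ; apply: contrapT => hn; apply: iQ; exists 0%N, (fun j : 'I_0 => match j with Ordinal _ h => False_rect _ (notF h) end).
by move=> x qx; case: hn; exists x.
Qed.

Lemma inj_seq (Q : I -> Prop) : infinitely_many Q -> forall N, exists g : 'I_N -> I,
  injective g /\ forall j, Q (g j).
Proof.
move=> iQ; elim=> [|N [g [ginj gQ]]].
  by exists (fun j : 'I_0 => match j with Ordinal _ h => False_rect _ (notF h) end); split => -[].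
have [x [Qx nx]] : exists x, Q x /\ forall j, g j <> x.
  apply: contrapT => hn; apply: iQ; exists N, g => x qx; apply: contrapT => hx; apply: hn.
  by exists x; split => // j e; apply: hx; exists j.
exists (fun j => match unlift ord_max j with Some j' => g j' | None => x end); split.
  move=> j1 j2; case: (unliftP ord_max j1) => [j1' ->|->]; case: (unliftP ord_max j2) => [j2' ->|->] //.
  - by move/ginj ->.
  - by move/nx.
  - by move/esym/nx.
by move=> j; case: (unlift ord_max j).
Qed.
End Fin.

Section Suff.
Variables (I : Type) (n k l : nat) (A : 'M[Rprod I n.+1]_(k, l)).
Local Notation N := n.+1.

Lemma Fp_val_lt p (pr : prime p) (y : 'F_p) : (val y < p)%N.
Proof.
have h := ltn_ord y; rewrite /=; move: (nat_of_ord y) h => v.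
by rewrite (Fp_cast pr).
Qed.

Lemma Fp_natr p (y : 'F_p) : ((val y)%:R : 'F_p) = y.
Proof. exact: natr_Zp. Qed.

Lemma Fp_dvd p (pr : prime p) m : (p %| m)%N = ((m%:R : 'F_p) == 0).
Proof. exact: (dvdn_pcharf (pchar_Fp pr)). Qed.

Lemma gcc_m0 p (pr : prime p) (B : 'M['F_p]_(k, l)) : gen_columns_condition B ->
  (0 < l)%N /\ forall a, \sum_(j < l) B a j = 0.
Proof.
case=> m [f [d [fs [dn0 [s0 [_ hinf]]]]]].
case: m f d fs dn0 s0 hinf => [|m] f d fs dn0 s0 hinf; last first.
  by exfalso; apply: (hinf isT 0%N); apply: fin_finType.
have [j0 _] := fs ord0; split; first exact: (leq_ltn_trans (leq0n _) (ltn_ord j0)).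
move=> a; have := congr1 (fun M : 'M['F_p]_(k,1) => M a 0) s0; rewrite !mxE summxE.
move/eqP; rewrite mulf_eq0 (negbTE (dn0 ord0)) /= => /eqP e.
transitivity (\sum_(j < l | f j == ord0) col j B a 0); last exact: e.
by apply: eq_big => [j|j _]; rewrite ?ord1 ?eqxx // mxE.
Qed.

Lemma divp_pos p : prime p -> (p %| N)%N -> (0 < N %/ p)%N.
Proof. by move=> pr pn; rewrite divn_gt0 ?prime_gt0 // dvdn_leq. Qed.

Lemma suff_gcc p i : prime p -> (p %| N)%N -> gen_columns_condition (component_mod_p p A i) ->
  partition_regular A.
Proof.
move=> pr pn /(gcc_m0 pr) [l0 hs] r r0 chi.
have q0 := divp_pos pr pn.
pose e : Rprod I N := fun i' => inord (if pselect (i' = i) then (N %/ p)%N else 0%N).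
have eE i' : (e i' : nat) = (if pselect (i' = i) then (N %/ p)%N else 0%N).
  apply: inordK; destruct (pselect (i' = i)) => //.
  by rewrite ltn_divLR ?prime_gt0 // -[X in (X < _)%N]muln1 ltn_mul2l /= prime_gt1.
exists (fun _ => e); split; last split => //.
  by exists (Ordinal l0), i; rewrite eE; destruct (pselect (i = i)) => //=; rewrite -lt0n.
move=> a i'; rewrite (eq_bigr (fun j => (A a j i' : nat) * e i')%N) //.
rewrite -big_distrl /= eE; destruct (pselect (i' = i)) as [ei|ni]; last by rewrite muln0 mod0n.
subst i'.
apply/eqP; rewrite -/(dvdn _ _) mulnC -{1}(divnK pn) dvdn_pmul2l //.
rewrite Fp_dvd // natr_sum; have := hs a; rewrite /component_mod_p.
by move=> h; apply/eqP; rewrite -[RHS]h; apply: eq_bigr => j _; rewrite mxE.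
Qed.

Lemma suff_cc p : prime p -> (p %| N)%N ->
  infinitely_many (fun i : I => columns_condition (component_mod_p p A i)) ->
  partition_regular A.
Proof.
move=> pr pn inf r r0 chi.
have q0 := divp_pos pr pn.
have [B infB] := inf_pigeon (T := 'M['F_p]_(k, l))
  (P := fun B i => columns_condition (component_mod_p p A i) /\ component_mod_p p A i = B) inf
  (fun i h => ex_intro _ _ (conj h erefl)).
have ccB : columns_condition B by have [i [h <-]] := inf_ne infB.
have [X HX] := rado_suff ccB 'I_r.
have [g [ginj gQ]] := inj_seq infB #|X|.
pose io (x : X) := g (enum_rank x).
have ioinj : injective io by move=> x1 x2 /ginj /enum_rank_inj.
have ioB x : component_mod_p p A (io x) = B by case: (gQ (enum_rank x)).
pose ev (y : {ffun X -> 'F_p}) (i : I) : nat :=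
  if pselect (exists x, io x = i) is left h then (N %/ p * val (y (proj1_sig (cid h))))%N else 0%N.
have evlt y i : (ev y i < N)%N.
  rewrite /ev; destruct (pselect (exists x, io x = i)) => //.
  rewrite -[X in (_ < X)%N](divnK pn) ltn_mul2l q0 /=; exact: Fp_val_lt.
have evat y x : ev y (io x) = (N %/ p * val (y x))%N.
  rewrite /ev; destruct (pselect (exists x', io x' = io x)) as [h|h]; last by case: h; exists x.
  by case: (cid h) => x' /= /ioinj ->.
have evout y i : ~ (exists x, io x = i) -> ev y i = 0%N.
  by rewrite /ev => h; destruct (pselect (exists x, io x = i)).
pose emb (y : {ffun X -> 'F_p}) : Rprod I N := fun i => inord (ev y i).
have embE y i : (emb y i : nat) = ev y i by rewrite inordK.
have [y [yeq [[j0 [x0 nz]] ymono]]] := HX (fun y => chi (emb y)).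
exists (fun j => emb (y j)); split; last split.
- exists j0, (io x0); rewrite embE evat muln_eq0 negb_or -lt0n q0 /=.
  by apply: contra nz => /eqP h; apply/eqP/val_inj; rewrite /= h.
- move=> a i; under eq_bigr => j _ do rewrite embE.
  destruct (pselect (exists x, io x = i)) as [[x <-]|h]; last first.
    by rewrite big1 ?mod0n // => j _; rewrite evout // muln0.
  under eq_bigr => j _ do rewrite evat mulnCA.
  rewrite -big_distrr /=; apply/eqP; rewrite -/(dvdn _ _) -{1}(divnK pn) dvdn_pmul2l //.
  rewrite Fp_dvd // natr_sum; apply/eqP; rewrite -[RHS](yeq a x); apply: eq_bigr => j _.
  by rewrite natrM Fp_natr -(ioB x) mxE.
- by move=> j j'; apply: ymono.
Qed.
End Suff.


Section WO.
Variable I : Type.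
Definition J := classicType I.

Lemma wo_props : exists R : rel J, [/\ transitive R, total R, antisymmetric R &
  forall P : J -> Prop, (exists x, P x) -> exists z, P z /\ forall x, P x -> R z x].
Proof.
have [R wo] := well_ordering_principle J.
have minP (P : J -> Prop) : (exists x, P x) -> exists z, P z /\ forall x, P x -> R z x.
  move=> [x px]; have [|z [[zin zlb] _]] := wo [pred y | `[< P y >]].
    by exists x; rewrite inE; apply/asboolP.
  exists z; split; first by move: zin; rewrite inE => /asboolP.
  by move=> y py; apply: zlb; rewrite inE; apply/asboolP.
have refl : forall x, R x x.
  move=> x.
  have [|z [[zin zlb] _]] := wo (pred1 x); first by exists x; rewrite inE.
  by move: zin; rewrite inE => /eqP e; rewrite -[X in R X]e; apply: zlb; rewrite inE.
have uniq2 : forall (x y : J), R x y -> R y x -> x = y.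
  move=> x y rxy ryx; have [|z [_ zu]] := wo [pred u | (u == x) || (u == y)].
    by exists x; rewrite inE eqxx.
  have -> : x = z.
    by apply/esym/zu; split; rewrite ?inE ?eqxx // => u; rewrite inE => /orP[] /eqP ->.
  by apply: zu; split; rewrite ?inE ?eqxx ?orbT // => u; rewrite inE => /orP[] /eqP ->.
exists R; split => //.
- move=> y x z rxy ryz.
  have [|w [[win wlb] _]] := wo [pred u | [|| u == x, u == y | u == z]].
    by exists x; rewrite inE eqxx.
  have lx : R w x by apply: wlb; rewrite inE eqxx.
  have ly : R w y by apply: wlb; rewrite inE eqxx orbT.
  have lz : R w z by apply: wlb; rewrite inE eqxx !orbT.
  move: win; rewrite inE => /or3P[] /eqP e; subst w => //.
    by rewrite (uniq2 _ _ rxy lx).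
  by rewrite -(uniq2 _ _ ryz ly).
- move=> x y.
  have [|w [[win wlb] _]] := wo [pred u | (u == x) || (u == y)].
    by exists x; rewrite inE eqxx.
  move: win; rewrite inE => /orP[] /eqP e; subst w.
    by rewrite wlb // inE eqxx orbT.
  by rewrite wlb ?orbT // inE eqxx.
- by move=> x y /andP[]; apply: uniq2.
Qed.
End WO.


Section Necessity.
Variables (I : Type) (n k l : nat) (A : 'M[Rprod I n.+1]_(k, l)).
Local Notation N := n.+1.

Lemma gcc_of_div p i : prime p -> (0 < l)%N -> (forall a, p %| \sum_(j < l) A a j i)%N ->
  gen_columns_condition (component_mod_p p A i).
Proof.
move=> pr l0 hd; exists 0%N, (fun _ => ord0), (fun _ => 1); split.
  by move=> t; exists (Ordinal l0); rewrite [t]ord1.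
split; first by move=> t; rewrite oner_neq0.
split.
  rewrite scale1r; apply/matrixP => a b; rewrite ord1 summxE !mxE.
  have := hd a; rewrite Fp_dvd // natr_sum => /eqP e.
  transitivity (\sum_(j < l) ((A a j i)%:R : 'F_p)); last exact: e.
  by apply: eq_big => [j|j _]; rewrite ?eqxx // !mxE.
by split => // t; rewrite ord1 eqxx.
Qed.

Lemma kill (i : I) (w : nat) : (w < N)%N ->
  (forall p, prime p -> (p %| N)%N -> exists a, ~~ (p %| \sum_(j < l) A a j i)%N) ->
  (forall a, N %| (\sum_(j < l) A a j i) * w)%N -> w = 0%N.
Proof.
move=> wN hp hN; apply/eqP; apply: contraT; rewrite -lt0n => w0.
set d := gcdn N w.
have d0 : (0 < d)%N by rewrite gcdn_gt0 w0 orbT.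
have dw : (d <= w)%N by apply: dvdn_leq => //; apply: dvdn_gcdr.
have dN : (d %| N)%N by apply: dvdn_gcdl.
set g := (N %/ d)%N.
have Ng : N = (g * d)%N by rewrite divnK.
have g1 : (1 < g)%N.
  rewrite ltnNge; apply/negP => g1; move: wN; rewrite Ng; move: g1 dw; clear; nia.
have pr := pdiv_prime g1.
have pN : (pdiv g %| N)%N by rewrite Ng dvdn_mulr // pdiv_dvd.
have [a na] := hp _ pr pN; rewrite -(negbTE na).
apply: dvdn_trans (pdiv_dvd g) _.
set s := (\sum_(j < l) A a j i)%N.
have h1 : (N %| s * d)%N.
  rewrite /d gcdnC muln_gcdr dvdn_gcd hN andTb; exact: dvdn_mull.
by move: h1; rewrite Ng dvdn_pmul2r.
Qed.


Lemma nec : partition_regular A ->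
  ~ (exists p : nat, prime p /\ (p %| N)%N /\
     ((exists i : I, gen_columns_condition (component_mod_p p A i)) \/
      infinitely_many (fun i : I => columns_condition (component_mod_p p A i)))) -> False.
Proof.
move=> PR nR.
have H p : prime p -> (p %| N)%N -> (forall i, ~ gen_columns_condition (component_mod_p p A i)) /\
    finitely_many (fun i : I => columns_condition (component_mod_p p A i)).
  move=> pr pn; split => [i g|].
    by apply: nR; exists p; split => //; split => //; left; exists i.
  by apply: contrapT => h; apply: nR; exists p; split => //; split => //; right.
have [x0 [[j0 [i0 _]] _]] := PR 1%N isT (fun _ => ord0).
have l0 : (0 < l)%N := leq_ltn_trans (leq0n _) (ltn_ord j0).
have hp i p : prime p -> (p %| N)%N -> exists a, ~~ (p %| \sum_(j < l) A a j i)%N.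
  move=> pr pn; apply: contrapT => hn; apply: ((H p pr pn).1 i); apply: gcc_of_div => // a.
  by apply/negPn/negP => na; apply: hn; exists a.
have finCC : finitely_many (fun i => exists t : 'I_N.+1, prime t /\ (t %| N)%N /\
     columns_condition (component_mod_p t A i)).
  apply: fin_union => t; case: (pselect (prime t /\ (t %| N)%N)) => [[pr pn]|np].
    by apply: fin_mono (H t pr pn).2 _ => i [_ [_ h]].
  exists 0%N, (fun j : 'I_0 => match j with Ordinal _ h => False_rect _ (notF h) end).
  by move=> i [pr [pn _]]; case: np.
have [M [G HG]] := finCC.
have GCC p i : prime p -> (p %| N)%N -> columns_condition (component_mod_p p A i) ->
    exists q, G q = i.
  move=> pr pn cc; apply: HG.
  have pN : (p < N.+1)%N by rewrite ltnS dvdn_leq.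
  by exists (Ordinal pN).
have [R [Rtr Rtot Ranti Rmin]] := wo_props I.
pose D (y : Rprod I N) (d : nat) := (d %| N)%N /\ forall i, (d %| y i)%N.
pose emax (y : Rprod I N) := (\max_(d in [pred d : 'I_N.+1 | `[< D y d >]]) (d : nat))%N.
have D1 y : D y 1%N by split => // i; apply: dvd1n.
have emaxD y : D y (emax y) /\ forall d, D y d -> (d <= emax y)%N.
  split.
    rewrite /emax; have [|d0 d0in ->] := @eq_bigmax_cond _ [pred d : 'I_N.+1 | `[< D y d >]] (fun d => nat_of_ord d).
      by apply/card_gt0P; exists (Ordinal (isT : (1 < N.+1)%N)); rewrite inE; apply/asboolP.
    by move: d0in; rewrite inE => /asboolP.
  move=> d Dd; have dN : (d < N.+1)%N by rewrite ltnS dvdn_leq //; case: Dd.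
  rewrite /emax; have -> : d = Ordinal dN by [].
  by apply: (@leq_bigmax_cond _ _ (fun d => nat_of_ord d) (Ordinal dN)); rewrite inE; apply/asboolP.
have emax0 y : (0 < emax y)%N by apply: (emaxD y).2.
pose pe y := pdiv (N %/ emax y).
pose u (y : Rprod I N) (i : I) := ((y i) %/ emax y %% pe y)%N.
pose lead (y : Rprod I N) : J I :=
  if pselect (exists i : J I, u y i != 0%N) is left h then proj1_sig (cid (Rmin _ h)) else i0.
have leadP y : (exists i, u y i != 0%N) -> u y (lead y) != 0%N /\ forall i, u y i != 0%N -> R (lead y) i.
  move=> h; rewrite /lead; destruct (pselect (exists i : J I, u y i != 0%N)) as [h'|h']; last by case: h'.
  by case: (cid (Rmin _ h')) => z [pz hz].
pose T : finType := ({ffun 'I_M -> 'I_N} * 'I_N.+1 * {ffun 'I_k * 'I_l -> 'I_N} * 'I_N)%type.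
pose col (y : Rprod I N) : T := ([ffun q => y (G q)], inord (emax y),
   [ffun ab : 'I_k * 'I_l => A ab.1 ab.2 (lead y)], y (lead y)).
have T0 : (0 < #|T|)%N by apply/card_gt0P; exists (col (x0 j0)).
have [x [[j1 [i1 nz]] [sol mono]]] := PR #|T| T0 (fun y => enum_rank (col y)).
have colE j : col (x j) = col (x j1) by apply: enum_rank_inj; apply: mono.
have xG j q : x j (G q) = x j1 (G q).
  by have := congr1 (fun c : T => c.1.1.1 q) (colE j); rewrite /= !ffunE.
have xG0 j q : (x j (G q) : nat) = 0%N.
  rewrite xG; apply: (@kill (G q)) => //; first by move=> p pr pn; apply: hp.
  move=> a; have := sol a (G q); under eq_bigr => j' _ do rewrite (xG j' q).
  by rewrite -big_distrl /= /dvdn => ->.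
have emaxN y : (emax y <= N)%N by apply: dvdn_leq => //; case: (emaxD y).1.
set e := emax (x j1).
have eE j : emax (x j) = e.
  by have := congr1 (fun c : T => (c.1.1.2 : nat)) (colE j); rewrite /= !inordK ?ltnS.
have [De emaxle] := emaxD (x j1).
have e0 : (0 < e)%N by apply: emax0.
have eN : (e < N)%N.
  rewrite ltn_neqAle emaxN andbT; apply/eqP => eq; move: nz; rewrite -lt0n => nz.
  by have := dvdn_leq nz (De.2 i1); rewrite -/e eq leqNgt ltn_ord.
set g := (N %/ e)%N.
have Ng : N = (g * e)%N by rewrite divnK //; case: De.
have g1 : (1 < g)%N by rewrite ltnNge; apply/negP => g1; move: eN; rewrite Ng; move: g1 e0; clear; nia.
set p := pdiv g.
have pr : prime p := pdiv_prime g1.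
have pN : (p %| N)%N by rewrite Ng dvdn_mulr // pdiv_dvd.
pose U j i := ((x j i) %/ e %% p)%N.
have uE j i : u (x j) i = U j i by rewrite /u /pe eE.
have Ulp j i : (U j i < p)%N by rewrite ltn_mod prime_gt0.
have Dx j : D (x j) e by rewrite -(eE j); case: (emaxD (x j)).
have Unz j : exists i, U j i != 0%N.
  apply: contrapT => hn.
  have hall i : (p %| x j i %/ e)%N.
    by rewrite /dvdn; apply: contraT => h; case: hn; exists i.
  have Dep : D (x j) (e * p)%N.
    split; first by rewrite Ng mulnC dvdn_pmul2r // pdiv_dvd.
    move=> i; rewrite -(divnK ((Dx j).2 i)) [X in (_ %| X)%N]mulnC dvdn_pmul2l //.
  have := (emaxD (x j)).2 _ Dep; rewrite eE -{2}(muln1 e) leq_pmul2l //.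
  by rewrite leqNgt prime_gt1.
have UG j q : U j (G q) = 0%N by rewrite /U xG0 div0n mod0n.
have Ueq i a : \sum_(j < l) ((A a j i)%:R : 'F_p) * (U j i)%:R = 0.
  have := sol a i.
  have -> : (\sum_(j < l) A a j i * x j i = (\sum_(j < l) A a j i * (x j i %/ e)) * e)%N.
    transitivity (\sum_(j < l) A a j i * (x j i %/ e) * e)%N; last by rewrite -big_distrl.
    by apply: eq_bigr => j _; rewrite -mulnA divnK //; exact: (Dx j).2.
  move=> h; have : (N %| (\sum_(j < l) A a j i * (x j i %/ e)) * e)%N by rewrite /dvdn h.
  rewrite {1}Ng dvdn_pmul2r // => /(dvdn_trans (pdiv_dvd g)).
  rewrite Fp_dvd // natr_sum => /eqP e'; rewrite -[RHS]e'; apply: eq_bigr => j _.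
  by rewrite natrM Fp_nat_mod.
pose L j := lead (x j).
have LP j : U j (L j) != 0%N /\ forall i, U j i != 0%N -> R (L j) i.
  have [i hi] := Unz j.
  have [h1 h2] : u (x j) (lead (x j)) != 0%N /\ forall i, u (x j) i != 0%N -> R (lead (x j)) i.
    by apply: leadP; exists i; rewrite uE.
  by split; [rewrite -uE | move=> i' hi'; apply: h2; rewrite uE].
have Ltype j a b : A a b (L j) = A a b (L j1).
  by have := congr1 (fun c : T => c.1.2 (a, b)) (colE j); rewrite /= !ffunE.
have Lval j : U j (L j) = U j1 (L j1).
  by have := congr1 (fun c : T => c.2) (colE j); rewrite /= /U => ->.
set c := ((U j1 (L j1))%:R : 'F_p).
have c0 : c != 0.
  rewrite /c -Fp_dvd //; apply/negP => /dvdn_leq; rewrite lt0n (LP j1).1 => /(_ isT).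
  by rewrite leqNgt Ulp.
have cc := @rado_nec 'F_p k l (component_mod_p p A (L j1)) (J I) R Rtr Rtot Ranti L
  (fun j i => ((U j i)%:R : 'F_p)) c c0 l0 (fun j => congr1 _ (Lval j)).
have cc' : columns_condition (component_mod_p p A (L j1)).
  apply: cc.
    move=> j i h; apply: (LP j).2; apply: contra h => /eqP ->; by [].
  move=> j a; rewrite -[RHS](Ueq (L j) a); apply: eq_bigr => j' _.
  by rewrite mxE Ltype.
have [q Gq] := GCC p (L j1) pr pN cc'.
by move: (LP j1).1; rewrite -Gq UG.
Qed.
End Necessity.


Local Close Scope ring_scope.
Unset Implicit Arguments.

Theorem proposition4p6 (I : Type) (n k l : nat) (A : 'M[Rprod I n]_(k, l)) :
  (0 < n)%N ->
  (partition_regular A <->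
   exists p : nat, prime p /\ (p %| n)%N /\
     ((exists i : I, gen_columns_condition (component_mod_p p A i)) \/
      infinitely_many (fun i : I => columns_condition (component_mod_p p A i)))).
Proof.
case: n A => [//|n] A _; split.
  by move=> pr; apply: contrapT => nR; exact: (nec pr nR).
case=> p [pr [pn [[i g]|inf]]]; [exact: (suff_gcc pr pn g) | exact: (suff_cc pr pn inf)].
Qed.
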